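(* (a) If $\Lambda$ is a boundary lamination, then no point $p\in S^1$ is contained in more than two leaves of $\Lambda$. (b) Conversely, suppose $\Lambda$ is a lamination such that no point $p\in S^1$ is contained in more than two leaves of $\Lambda$, and $\Lambda$ has no isolated leaves. Let $\mathcal{L}:=\mathrm{Rel}(\Lambda)$. Then $\mathrm{Lam}(\mathcal{L})=\Lambda$; in particular $\Lambda$ is a boundary lamination.
   Context: A lamination is a closed subset of the space of unordered pairs of distinct points of $S^1$ such that no two elements (leaves) are linked in $S^1$. Leaves are also viewed as geodesics in $\mathbb{H}^2$ with $S^1=\partial\mathbb{H}^2$; a leaf is isolated if it is not a limit of other leaves on either side. A laminar relation is an equivalence relation on $S^1$ with closed classes, closed in the space of unordered distinct pairs, with distinct classes unlinked. For a laminar relation $\mathcal{L}$, $\mathrm{Lam}(\mathcal{L})$ is the lamination consisting, for each nontrivial class $\nu$, of the pair $\nu$ if $|\nu|=2$ and of the endpoint pairs of the sides of the hyperbolic convex hull of $\nu$ if $|\nu|>2$; a lamination of this form is a boundary lamination. For a lamination $\Lambda$, $\mathrm{Rel}(\Lambda)$ is the smallest closed equivalence relation (as a set of unordered pairs) containing $\Lambda$ and containing every unordered pair that crosses only countably many leaves of $\Lambda$. *)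

(* Defs.v *)
From Stdlib Require Import Reals.
Open Scope R_scope.

(** The circle S^1 = R/Z, represented by the points t with 0 <= t < 1. *)
Definition S1 : Type := { t : R | 0 <= t < 1 }.
Definition pt (p : S1) : R := proj1_sig p.

Definition cdist (p q : S1) : R :=
  Rmin (Rabs (pt p - pt q)) (1 - Rabs (pt p - pt q)).

(** For a <> b, S^1 \ {a,b} has two components (open arcs):
    [arc_in a b] (between the representatives) and [arc_out a b]. *)
Definition arc_in (a b x : S1) : Prop :=
  Rmin (pt a) (pt b) < pt x < Rmax (pt a) (pt b).
Definition arc_out (a b x : S1) : Prop :=
  pt x < Rmin (pt a) (pt b) \/ Rmax (pt a) (pt b) < pt x.

Definition linked (a b c d : S1) : Prop :=
  a <> b /\ c <> d /\
  ((arc_in a b c /\ arc_out a b d) \/ (arc_out a b c /\ arc_in a b d)).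

(** Sets of unordered pairs of distinct points are encoded as symmetric
    irreflexive relations. *)
Definition upair_set (A : S1 -> S1 -> Prop) : Prop :=
  (forall p q, A p q -> p <> q) /\ (forall p q, A p q -> A q p).

(** Closedness of {(p,q) | p <> q, A p q} in the space of (unordered) pairs of
    distinct points: its complement there is open. *)
Definition closed_pairs (A : S1 -> S1 -> Prop) : Prop :=
  forall p q, p <> q -> ~ A p q ->
    exists eps, 0 < eps /\
      forall p' q', cdist p p' < eps -> cdist q q' < eps -> ~ A p' q'.

Definition closed_set (X : S1 -> Prop) : Prop :=
  forall p, ~ X p -> exists eps, 0 < eps /\ forall p', cdist p p' < eps -> ~ X p'.

Definition lamination (La : S1 -> S1 -> Prop) : Prop :=
  upair_set La /\ closed_pairs La /\
  (forall a b c d, La a b -> La c d -> ~ linked a b c d).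

Definition same_upair (a b c d : S1) : Prop := (a = c /\ b = d) \/ (a = d /\ b = c).

Definition upair_near (eps : R) (a b c d : S1) : Prop :=
  (cdist a c < eps /\ cdist b d < eps) \/ (cdist a d < eps /\ cdist b c < eps).

Definition isolated_leaf (La : S1 -> S1 -> Prop) (a b : S1) : Prop :=
  La a b /\ exists eps, 0 < eps /\
    forall c d, La c d -> upair_near eps a b c d -> same_upair a b c d.

Definition no_isolated_leaves (La : S1 -> S1 -> Prop) : Prop :=
  forall a b, La a b -> ~ isolated_leaf La a b.

Definition at_most_two_leaves_at_each_point (La : S1 -> S1 -> Prop) : Prop :=
  forall p q1 q2 q3, La p q1 -> La p q2 -> La p q3 ->
    q1 = q2 \/ q1 = q3 \/ q2 = q3.

Definition equivalence_rel (E : S1 -> S1 -> Prop) : Prop :=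
  (forall x, E x x) /\ (forall x y, E x y -> E y x) /\
  (forall x y z, E x y -> E y z -> E x z).

Definition laminar_relation (L : S1 -> S1 -> Prop) : Prop :=
  equivalence_rel L /\
  (forall x, closed_set (L x)) /\
  closed_pairs L /\
  (forall a b c d, L a b -> L c d -> ~ L a c -> ~ linked a b c d).

Definition two_point_class (L : S1 -> S1 -> Prop) (a b : S1) : Prop :=
  a <> b /\ L a b /\ forall x, L a x -> x = a \/ x = b.

(** For a closed set nu in S^1 with more than two points, {a,b} (a,b in nu,
    a <> b) is the pair of endpoints of a side of the hyperbolic convex hull of
    nu iff one of the two open arcs of S^1 \ {a,b} misses nu. *)
Definition hull_side (nu : S1 -> Prop) (a b : S1) : Prop :=
  nu a /\ nu b /\ a <> b /\
  ((forall x, nu x -> ~ arc_in a b x) \/ (forall x, nu x -> ~ arc_out a b x)).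

Definition Lam (L : S1 -> S1 -> Prop) (a b : S1) : Prop :=
  two_point_class L a b \/
  (~ two_point_class L a b /\ (exists x y, L a x /\ L a y /\ x <> y /\ x <> a /\ y <> a)
   /\ hull_side (L a) a b).

Definition boundary_lamination (La : S1 -> S1 -> Prop) : Prop :=
  exists L, laminar_relation L /\ forall a b, La a b <-> Lam L a b.

Definition countable_set {X : Type} (P : X -> Prop) : Prop :=
  exists f : X -> nat, forall x y, P x -> P y -> f x = f y -> x = y.

(** The (ordered encodings of the) leaves of La crossed by {a,b}. *)
Definition crossed_leaves (La : S1 -> S1 -> Prop) (a b : S1) (cd : S1 * S1) : Prop :=
  La (fst cd) (snd cd) /\ linked a b (fst cd) (snd cd).

Definition closed_equivalence (E : S1 -> S1 -> Prop) : Prop :=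
  equivalence_rel E /\ closed_pairs E.

(** Rel(La): the smallest closed equivalence relation containing La and every
    pair {a,b} crossing only countably many leaves of La (the intersection of
    all such relations). *)
Definition Rel (La : S1 -> S1 -> Prop) (p q : S1) : Prop :=
  forall E, closed_equivalence E ->
    (forall a b, La a b -> E a b) ->
    (forall a b, a <> b -> countable_set (crossed_leaves La a b) -> E a b) ->
    E p q.

(* Main.v *)
Require Import Defs.
From Stdlib Require Import Reals.
From Stdlib Require Import Lra Classical ProofIrrelevance ClassicalEpsilon FunctionalExtensionality PropExtensionality.
Open Scope R_scope.


Lemma pt_inj : forall x y : S1, pt x = pt y -> x = y.
Proof.
  intros [x Hx] [y Hy]; unfold pt; simpl; intros ->.
  f_equal; apply proof_irrelevance.
Qed.

Lemma pt_bnd : forall x : S1, 0 <= pt x < 1.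
Proof. intros [x Hx]; exact Hx. Qed.

Definition rho (o x : S1) : R :=
  if Rle_dec (pt o) (pt x) then pt x - pt o else pt x - pt o + 1.

Ltac add_bounds :=
  repeat match goal with
  | x : S1 |- _ =>
     lazymatch goal with
     | H : 0 <= pt x < 1 |- _ => fail
     | _ => pose proof (pt_bnd x)
     end
  end.

Ltac split_ifs :=
  repeat match goal with
  | |- context [Rle_dec ?x ?y] => destruct (Rle_dec x y)
  | H : context [Rle_dec ?x ?y] |- _ => destruct (Rle_dec x y)
  | |- context [Rcase_abs ?x] => destruct (Rcase_abs x)
  | H : context [Rcase_abs ?x] |- _ => destruct (Rcase_abs x)
  end.

Ltac decomp :=
  repeat match goal with
  | H : _ /\ _ |- _ => destruct H
  | H : _ \/ _ |- _ => destruct H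
  | H : @eq S1 _ _ |- _ => subst
  | H : ~ (@eq S1 ?x ?y) |- _ =>
      let E := fresh in
      assert (E : pt x < pt y \/ pt y < pt x)
        by (destruct (Rtotal_order (pt x) (pt y)) as [?|[?|?]];
            [left; auto | exfalso; apply H, pt_inj; auto | right; auto]);
      clear H
  end.

Ltac solve_goal :=
  match goal with
  | |- _ /\ _ => split; solve_goal
  | |- _ \/ _ => (left; solve_goal) || (right; solve_goal)
  | |- ~ (@eq S1 _ _) => let E := fresh in intro E; subst; lra
  | |- @eq S1 _ _ => apply pt_inj; lra
  | |- ~ _ => intro; decomp; lra
  | |- _ => lra
  end.

Ltac unf := unfold linked, arc_in, arc_out, rho, cdist, Rmin, Rmax, Rabs in *.

Ltac finish :=
  solve_goal || (exfalso; lra) ||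
  match goal with x : S1, y : S1 |- _ =>
    assert_fails (assert (pt x < pt y) by lra);
    assert_fails (assert (pt y <= pt x) by lra);
    destruct (Rlt_or_le (pt x) (pt y)); finish end.

Ltac brute := intros; add_bounds; unf; decomp; split_ifs; decomp; finish.

Lemma LR : forall a b x y, linked a b x y <->
  ((0 < rho a x < rho a b /\ rho a b < rho a y) \/ (0 < rho a y < rho a b /\ rho a b < rho a x)).
Proof. split; brute. Qed.

Lemma linked_sym12 : forall a b x y, linked a b x y -> linked b a x y.
Proof. brute. Qed.
Lemma linked_sym34 : forall a b x y, linked a b x y -> linked a b y x.
Proof. brute. Qed.
Lemma linked_swap : forall a b x y, linked a b x y -> linked x y a b.
Proof. brute. Qed.
Lemma K1 : forall a b c x y, linked a c x y -> b <> x -> b <> y -> b <> a -> b <> c ->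
  linked a b x y \/ linked b c x y.
Proof. brute. Qed.
Lemma K2 : forall a b c d x y, linked a b c d -> linked a c x y ->
  linked a b x y \/ linked c d x y.
Proof. brute. Qed.

Lemma rho_bnd : forall o x, 0 <= rho o x < 1.
Proof. brute. Qed.
Lemma rho_self : forall o, rho o o = 0.
Proof. brute. Qed.
Lemma rho_pos : forall o x, x <> o -> 0 < rho o x.
Proof. brute. Qed.
Lemma rho_inj : forall o x y, rho o x = rho o y -> x = y.
Proof. brute. Qed.
Lemma cdist_le : forall o x y, cdist x y <= Rabs (rho o x - rho o y).
Proof. brute. Qed.
Lemma cdist_lt : forall o x y eps d, cdist x y < eps -> d <= rho o x <= 1 - d -> eps <= d ->
  Rabs (rho o x - rho o y) < eps.
Proof. brute. Qed.
Lemma cdist_lt' : forall o x y eps d, cdist y x < eps -> d <= rho o x <= 1 - d -> eps <= d ->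
  Rabs (rho o x - rho o y) < eps.
Proof. brute. Qed.
Lemma cdist_base : forall o p eps, cdist o p < eps -> rho o p < eps \/ 1 - eps < rho o p.
Proof. brute. Qed.
Lemma interleave : forall o p q x y, rho o p < rho o x < rho o q ->
  (rho o y < rho o p \/ rho o q < rho o y) -> linked p q x y.
Proof. brute. Qed.
Lemma rho_flip : forall a b x, a <> b -> (rho a b < rho a x <-> 0 < rho b x < rho b a).
Proof. split; brute. Qed.
Lemma cdist_sym : forall x y, cdist x y = cdist y x.
Proof. intros; unfold cdist; rewrite Rabs_minus_sym; reflexivity. Qed.
Lemma cdist_self : forall x, cdist x x = 0.
Proof. intros; unfold cdist. rewrite Rminus_diag, Rabs_R0. unfold Rmin; destruct Rle_dec; lra. Qed.

Lemma arcs_rho : forall a b, a <> b ->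
  ((forall x, arc_in a b x <-> 0 < rho a x < rho a b) /\ (forall x, arc_out a b x <-> rho a b < rho a x)) \/
  ((forall x, arc_in a b x <-> rho a b < rho a x) /\ (forall x, arc_out a b x <-> 0 < rho a x < rho a b)).
Proof.
  intros a b H. destruct (Rlt_or_le (pt a) (pt b)).
  - left; split; intro x; split; brute.
  - right; split; intro x; split; brute.
Qed.

Lemma from_rho : forall o t, 0 <= t < 1 -> exists x, rho o x = t.
Proof.
  intros o t Ht. pose proof (pt_bnd o).
  destruct (Rlt_or_le (pt o + t) 1).
  - assert (Hb : 0 <= pt o + t < 1) by lra.
    exists (exist _ (pt o + t) Hb). unfold rho, pt at 2 3; simpl. fold (pt o).
    destruct Rle_dec; lra.
  - assert (Hb : 0 <= pt o + t - 1 < 1) by lra.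
    exists (exist _ (pt o + t - 1) Hb). unfold rho, pt at 2 3; simpl. fold (pt o).
    destruct Rle_dec; lra.
Qed.

Definition unc (La : S1 -> S1 -> Prop) a b := forall x y, La x y -> ~ linked a b x y.
Definition Est (La : S1 -> S1 -> Prop) a b := a = b \/ unc La a b.

Lemma small4 : forall a b c d, 0 < a -> 0 < b -> 0 < c -> 0 < d ->
  exists e, 0 < e /\ e <= a /\ e <= b /\ e <= c /\ e <= d.
Proof.
  intros. exists (Rmin (Rmin a b) (Rmin c d)).
  unfold Rmin; split_ifs; repeat split; lra.
Qed.

Lemma lam_sym : forall La, lamination La -> forall x y, La x y -> La y x.
Proof. intros La [[_ H] _] x y; apply H. Qed.
Lemma lam_irr : forall La, lamination La -> forall x y, La x y -> x <> y.
Proof. intros La [[H _] _] x y; apply H. Qed.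
Lemma lam_unl : forall La, lamination La -> forall a b c d, La a b -> La c d -> ~ linked a b c d.
Proof. intros La [_ [_ H]]; apply H. Qed.

Lemma near_leaf : forall La, lamination La -> no_isolated_leaves La ->
  forall x y, La x y -> forall eps, 0 < eps ->
  exists p q, La p q /\ cdist x p < eps /\ cdist y q < eps /\ ~ (p = x /\ q = y).
Proof.
  intros La HL HN x y Hxy eps He.
  destruct (classic (exists p q, La p q /\ cdist x p < eps /\ cdist y q < eps /\ ~ (p = x /\ q = y))) as [H|H]; auto.
  exfalso. apply (HN x y Hxy). split; auto. exists eps; split; auto.
  intros c d Hcd [[H1 H2]|[H1 H2]].
  - destruct (classic (c = x /\ d = y)) as [[-> ->]|Hn]. left; auto.
    exfalso; apply H; exists c, d; auto.
  - destruct (classic (d = x /\ c = y)) as [[-> ->]|Hn]. right; auto.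
    exfalso; apply H; exists d, c; repeat split; auto. apply lam_sym; auto.
Qed.

Lemma unc_sym : forall La a b, unc La a b -> unc La b a.
Proof. intros La a b H x y Hxy Hl. apply (H x y Hxy). apply linked_sym12; auto. Qed.

Lemma Est_sym : forall La a b, Est La a b -> Est La b a.
Proof. intros La a b [H|H]; [left; auto | right; apply unc_sym; auto]. Qed.

Lemma step_H1 : forall La, lamination La -> no_isolated_leaves La ->
  forall a b c y, La b y -> linked a c b y -> unc La a b -> unc La b c ->
  forall eps, 0 < eps ->
  exists d, La b d /\ d <> y /\ Rabs (rho a d - rho a y) < eps /\ linked a c b d.
Proof.
  intros La HL HN a b c y Hby Hl Hab Hbc eps He.
  pose proof (proj1 (LR _ _ _ _) Hl) as Hr.
  assert (Hd : exists d, 0 < d /\ d <= rho a b <= 1 - d /\ d <= rho a y <= 1 - d /\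
     2 * d <= Rabs (rho a b - rho a c) /\ 2 * d <= Rabs (rho a y - rho a c) /\ d <= eps).
  { pose proof (rho_bnd a b); pose proof (rho_bnd a y); pose proof (rho_bnd a c).
    destruct Hr as [[[? ?] ?]|[[? ?] ?]].
    - destruct (small4 (rho a b) (1 - rho a b) (rho a y) (1 - rho a y)) as [d1 [? [? [? [? ?]]]]]; try lra.
      destruct (small4 d1 ((rho a c - rho a b)/2) ((rho a y - rho a c)/2) eps) as [d [? [? [? [? ?]]]]]; try lra.
      exists d; unfold Rabs; repeat split; try lra; destruct Rcase_abs; lra.
    - destruct (small4 (rho a b) (1 - rho a b) (rho a y) (1 - rho a y)) as [d1 [? [? [? [? ?]]]]]; try lra.
      destruct (small4 d1 ((rho a b - rho a c)/2) ((rho a c - rho a y)/2) eps) as [d [? [? [? [? ?]]]]]; try lra.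
      exists d; unfold Rabs; repeat split; try lra; destruct Rcase_abs; lra. }
  destruct Hd as [d [Hd0 [Hdb [Hdy [Hdbc [Hdyc Hde]]]]]].
  destruct (near_leaf La HL HN b y Hby d Hd0) as [p [q [Hpq [Hp [Hq Hn]]]]].
  pose proof (cdist_lt a b p d d Hp Hdb (Rle_refl _)) as Hp'.
  pose proof (cdist_lt a y q d d Hq Hdy (Rle_refl _)) as Hq'.
  assert (Hl2 : linked a c p q).
  { apply LR. revert Hr Hp' Hq' Hdbc Hdyc. unfold Rabs; split_ifs; lra. }
  destruct (classic (p = b)) as [->|Hpb].
  - exists q; split; [auto|split; [|split]].
    + intro E; subst; apply Hn; auto.
    + rewrite Rabs_minus_sym; lra.
    + exact Hl2.
  - exfalso.
    assert (Hqb : b <> q).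
    { intro E; subst. revert Hdb Hdy Hp' Hq' Hdbc Hdyc. unfold Rabs; split_ifs; lra. }
    assert (Hba : b <> a).
    { intro E; subst. rewrite rho_self in Hdb; lra. }
    assert (Hbc2 : b <> c).
    { intro E; subst. rewrite Rminus_diag, Rabs_R0 in Hdbc; lra. }
    destruct (K1 a b c p q Hl2 (fun E => Hpb (eq_sym E)) Hqb Hba Hbc2) as [H|H].
    + exact (Hab p q Hpq H).
    + exact (Hbc p q Hpq H).
Qed.

Lemma H1_core : forall La, lamination La -> no_isolated_leaves La -> at_most_two_leaves_at_each_point La ->
  forall a b c y, La b y -> linked a c b y -> unc La a b -> unc La b c -> False.
Proof.
  intros La HL HN H2 a b c y Hby Hl Hab Hbc.
  destruct (step_H1 La HL HN a b c y Hby Hl Hab Hbc 1 Rlt_0_1) as [d1 [Hd1 [Hn1 [_ Hl1]]]].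
  assert (Hpos : 0 < Rabs (rho a d1 - rho a y)).
  { apply Rabs_pos_lt. intro E. apply Hn1, (rho_inj a). lra. }
  destruct (step_H1 La HL HN a b c d1 Hd1 Hl1 Hab Hbc _ Hpos) as [d2 [Hd2 [Hn2 [Hc2 _]]]].
  assert (d2 <> y).
  { intro E; subst. rewrite Rabs_minus_sym in Hc2; lra. }
  destruct (H2 b y d1 d2 Hby Hd1 Hd2) as [E|[E|E]]; subst; auto.
Qed.

Lemma Est_trans : forall La, lamination La -> no_isolated_leaves La -> at_most_two_leaves_at_each_point La ->
  forall a b c, Est La a b -> Est La b c -> Est La a c.
Proof.
  intros La HL HN H2 a b c Hab Hbc.
  destruct (classic (a = b)) as [->|Nab]; auto.
  destruct (classic (b = c)) as [->|Nbc]; auto.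
  destruct (classic (a = c)) as [->|Nac]; [left; auto|].
  destruct Hab as [?|Hab]; [contradiction|]. destruct Hbc as [?|Hbc]; [contradiction|].
  right. intros x y Hxy Hl.
  destruct (classic (b = x)) as [<-|Nbx].
  - exact (H1_core La HL HN H2 a b c y Hxy Hl Hab Hbc).
  - destruct (classic (b = y)) as [<-|Nby].
    + apply (H1_core La HL HN H2 a b c x (lam_sym La HL _ _ Hxy) (linked_sym34 _ _ _ _ Hl) Hab Hbc).
    + destruct (K1 a b c x y Hl Nbx Nby (fun E => Nab (eq_sym E)) Nbc) as [H|H].
      * exact (Hab x y Hxy H).
      * exact (Hbc x y Hxy H).
Qed.

Lemma Est_refl : forall La a, Est La a a.
Proof. intros; left; auto. Qed.

Lemma Est_La : forall La, lamination La -> forall a b, La a b -> Est La a b.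
Proof. intros La HL a b H. right. intros x y Hxy. apply (lam_unl La HL); auto. Qed.

Lemma not_Est : forall La a b, ~ Est La a b -> a <> b /\ exists x y, La x y /\ linked a b x y.
Proof.
  intros La a b H. split. intro E; apply H; left; auto.
  apply NNPP; intro H'. apply H; right. intros x y Hxy Hl. apply H'; eauto.
Qed.

Lemma link_open : forall p q c d, linked p q c d ->
  exists eps, 0 < eps /\ forall p' q', cdist p p' < eps -> cdist q q' < eps -> linked p' q' c d.
Proof.
  intros p q c d Hl.
  pose proof (linked_swap _ _ _ _ Hl) as Hs. apply LR in Hs.
  pose proof (rho_bnd c p); pose proof (rho_bnd c q); pose proof (rho_bnd c d).
  assert (Hd : exists e, 0 < e /\ e <= rho c p <= 1 - e /\ e <= rho c q <= 1 - e /\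
     e <= Rabs (rho c p - rho c d) /\ e <= Rabs (rho c q - rho c d)).
  { destruct Hs as [[[? ?] ?]|[[? ?] ?]].
    - destruct (small4 (rho c p) (1 - rho c p) (rho c q) (1 - rho c q)) as [d1 [? [? [? [? ?]]]]]; try lra.
      destruct (small4 d1 (rho c d - rho c p) (rho c q - rho c d) 1) as [e [? [? [? [? ?]]]]]; try lra.
      exists e; unfold Rabs; repeat split; try lra; destruct Rcase_abs; lra.
    - destruct (small4 (rho c p) (1 - rho c p) (rho c q) (1 - rho c q)) as [d1 [? [? [? [? ?]]]]]; try lra.
      destruct (small4 d1 (rho c p - rho c d) (rho c d - rho c q) 1) as [e [? [? [? [? ?]]]]]; try lra.
      exists e; unfold Rabs; repeat split; try lra; destruct Rcase_abs; lra. }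
  destruct Hd as [e [He [Hp [Hq [Hpd Hqd]]]]].
  exists e; split; auto. intros p' q' Hp' Hq'.
  pose proof (cdist_lt c p p' e e Hp' Hp (Rle_refl _)).
  pose proof (cdist_lt c q q' e e Hq' Hq (Rle_refl _)).
  apply linked_swap. apply LR.
  revert Hs H2 H3 Hpd Hqd. unfold Rabs; split_ifs; lra.
Qed.

Lemma Est_closed_pairs : forall La, closed_pairs (Est La).
Proof.
  intros La p q Hpq HE. destruct (not_Est _ _ _ HE) as [_ [x [y [Hxy Hl]]]].
  destruct (link_open _ _ _ _ Hl) as [e [He H]].
  exists e; split; auto. intros p' q' H1 H2 [E|E].
  - subst. pose proof (H _ _ H1 H2) as Hl'. destruct Hl' as [N _]; auto.
  - exact (E x y Hxy (H _ _ H1 H2)).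
Qed.

Lemma Est_closed_set : forall La x, Defs.closed_set (Est La x).
Proof.
  intros La x p HE. destruct (not_Est _ _ _ HE) as [_ [c [d [Hcd Hl]]]].
  destruct (link_open _ _ _ _ Hl) as [e [He H]].
  exists e; split; auto. intros p' H1 [E|E].
  - subst. assert (cdist p' p' < e) by (rewrite cdist_self; auto).
    pose proof (H _ _ H0 H1) as Hl'. destruct Hl' as [N _]; auto.
  - assert (cdist x x < e) by (rewrite cdist_self; auto).
    exact (E c d Hcd (H _ _ H0 H1)).
Qed.

Lemma Est_unlinked : forall La a b c d, Est La a b -> Est La c d -> ~ Est La a c -> ~ linked a b c d.
Proof.
  intros La a b c d Hab Hcd Hac Hl.
  destruct (not_Est _ _ _ Hac) as [_ [x [y [Hxy Hl2]]]].
  destruct Hab as [E|Hab]. { subst. destruct Hl as [N _]; auto. }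
  destruct Hcd as [E|Hcd]. { subst. destruct Hl as [_ [N _]]; auto. }
  destruct (K2 a b c d x y Hl Hl2) as [H|H].
  - exact (Hab x y Hxy H).
  - exact (Hcd x y Hxy H).
Qed.

Definition goodst (La : S1 -> S1 -> Prop) a b (s : S1 * S1 * R) : Prop :=
  let '(x, y, r) := s in
  La x y /\ 0 < r /\ 0 < rho a x - r /\ rho a x + r < rho a b /\
  rho a b < rho a y - r /\ rho a y + r < 1.

Definition stepP (La : S1 -> S1 -> Prop) a b (g : S1 * S1 -> nat) (n : nat) (s s' : S1 * S1 * R) : Prop :=
  let '(x, y, r) := s in let '(x', y', r') := s' in
  goodst La a b s' /\ r' <= r / 2 /\ Rabs (rho a x' - rho a x) + r' <= r /\
  Rabs (rho a y' - rho a y) + r' <= r /\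
  forall c d, crossed_leaves La a b (c, d) -> g (c, d) = n ->
    ~ (Rabs (rho a c - rho a x') <= r' /\ Rabs (rho a d - rho a y') <= r').

Lemma good_cross : forall La a b x y, La x y -> 0 < rho a x < rho a b -> rho a b < rho a y ->
  crossed_leaves La a b (x, y).
Proof. intros. split; simpl; auto. apply LR. left; lra. Qed.

Lemma step_exists : forall La, lamination La -> no_isolated_leaves La ->
  forall a b (g : S1 * S1 -> nat),
  (forall p q, crossed_leaves La a b p -> crossed_leaves La a b q -> g p = g q -> p = q) ->
  forall n s, goodst La a b s -> exists s', stepP La a b g n s s'.
Proof.
  intros La HL HN a b g Hg n [[x y] r] Hs.
  destruct Hs as [Hxy [Hr [H1 [H2 [H3 H4]]]]].
  pose proof (rho_bnd a b).
  assert (Hr2 : 0 < r / 2) by lra.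
  destruct (near_leaf La HL HN x y Hxy (r/2) Hr2) as [p [q [Hpq [Hp [Hq Hn]]]]].
  assert (Hp' : Rabs (rho a x - rho a p) < r / 2).
  { apply (cdist_lt a x p (r/2) r); auto; lra. }
  assert (Hq' : Rabs (rho a y - rho a q) < r / 2).
  { apply (cdist_lt a y q (r/2) r); auto; lra. }
  assert (Cx : crossed_leaves La a b (x, y)) by (apply good_cross; auto; lra).
  assert (Cp : crossed_leaves La a b (p, q)).
  { apply good_cross; auto; revert Hp' Hq'; unfold Rabs; split_ifs; lra. }
  assert (Hw : exists u v, La u v /\ Rabs (rho a u - rho a x) < r / 2 /\
             Rabs (rho a v - rho a y) < r / 2 /\ g (u, v) <> n).
  { destruct (Nat.eq_dec (g (x, y)) n) as [E|E].
    - exists p, q; repeat split; auto.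
      + rewrite Rabs_minus_sym; auto.
      + rewrite Rabs_minus_sym; auto.
      + intro E2. rewrite <- E in E2. pose proof (Hg _ _ Cp Cx E2) as E3.
        inversion E3; subst. apply Hn; auto.
    - exists x, y; repeat split; auto; rewrite Rminus_diag, Rabs_R0; lra. }
  destruct Hw as [u [v [Huv [Hu [Hv Hgn]]]]].
  assert (Hr' : exists r', 0 < r' /\ r' <= r / 4 /\
     forall c d, crossed_leaves La a b (c, d) -> g (c, d) = n ->
       ~ (Rabs (rho a c - rho a u) <= r' /\ Rabs (rho a d - rho a v) <= r')).
  { destruct (classic (exists c d, crossed_leaves La a b (c, d) /\ g (c, d) = n)) as [[c [d [Cc Gc]]]|Hno].
    - assert (Hne : rho a c <> rho a u \/ rho a d <> rho a v).
      { destruct (classic (rho a c = rho a u)) as [E1|E1]; auto.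
        destruct (classic (rho a d = rho a v)) as [E2|E2]; auto.
        apply rho_inj in E1; apply rho_inj in E2; subst. contradiction. }
      destruct Hne as [Hne|Hne].
      + assert (0 < Rabs (rho a c - rho a u)) by (apply Rabs_pos_lt; lra).
        exists (Rmin (r/4) (Rabs (rho a c - rho a u) / 2)).
        split; [|split]; [unfold Rmin; destruct Rle_dec; lra | apply Rmin_l |].
        intros c' d' Cc' Gc'. rewrite <- Gc in Gc'. pose proof (Hg _ _ Cc' Cc Gc') as E.
        inversion E; subst. pose proof (Rmin_r (r/4) (Rabs (rho a c - rho a u) / 2)). lra.
      + assert (0 < Rabs (rho a d - rho a v)) by (apply Rabs_pos_lt; lra).
        exists (Rmin (r/4) (Rabs (rho a d - rho a v) / 2)).
        split; [|split]; [unfold Rmin; destruct Rle_dec; lra | apply Rmin_l |].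
        intros c' d' Cc' Gc'. rewrite <- Gc in Gc'. pose proof (Hg _ _ Cc' Cc Gc') as E.
        inversion E; subst. pose proof (Rmin_r (r/4) (Rabs (rho a d - rho a v) / 2)). lra.
    - exists (r/4); split; [lra|split; [lra|]].
      intros c d Cc Gc. exfalso; apply Hno; eauto. }
  destruct Hr' as [r' [Hr'0 [Hr'1 Hav]]].
  exists (u, v, r'). simpl.
  revert Hu Hv. unfold Rabs at 1 2 3 4. split_ifs; intros; (split; [|split; [lra|split; [lra|split; [lra|exact Hav]]]]);
  repeat split; auto; lra.
Qed.

Lemma stepP_good : forall La a b g n s s', stepP La a b g n s s' -> goodst La a b s'.
Proof. intros La a b g n [[? ?] ?] [[? ?] ?]; simpl; tauto. Qed.

Lemma half_pow_small : forall r0 eps, 0 < eps -> exists N : nat, r0 * (1/2) ^ N < eps.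
Proof.
  intros r0 eps He.
  destruct (Rle_lt_dec r0 0).
  - exists 0%nat. simpl. lra.
  - destruct (pow_lt_1_zero (1/2) ltac:(rewrite Rabs_pos_eq; lra) (eps / r0) ltac:(apply Rdiv_lt_0_compat; lra)) as [N HN].
    exists N. specialize (HN N (le_n _)).
    rewrite Rabs_pos_eq in HN by (apply pow_le; lra).
    apply Rmult_lt_compat_l with (r := r0) in HN; auto.
    replace (r0 * (eps / r0)) with eps in HN by (field; lra). lra.
Qed.

Lemma H2 : forall La, lamination La -> no_isolated_leaves La ->
  forall a b, a <> b -> countable_set (crossed_leaves La a b) -> unc La a b.
Proof.
  intros La HL HN a b Hab [g Hg] x0 y0 H0 Hl0.
  assert (Hs0 : exists s0, goodst La a b s0).
  { apply LR in Hl0.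
    assert (Hor : exists x y, La x y /\ 0 < rho a x < rho a b /\ rho a b < rho a y).
    { destruct Hl0 as [[? ?]|[? ?]]; [exists x0, y0 | exists y0, x0; split; [apply lam_sym; auto|]]; auto. }
    destruct Hor as [x [y [Hxy [Hx Hy]]]]. pose proof (rho_bnd a y).
    destruct (small4 (rho a x / 2) ((rho a b - rho a x) / 2) ((rho a y - rho a b)/2) ((1 - rho a y)/2))
      as [e [? [? [? [? ?]]]]]; try lra.
    exists (x, y, e). simpl. repeat split; auto; lra. }
  destruct Hs0 as [s0 Hs0].
  assert (Hch : forall n s, exists s', goodst La a b s -> stepP La a b g n s s').
  { intros n s. destruct (classic (goodst La a b s)) as [Hs|Hs].
    - destruct (step_exists La HL HN a b g Hg n s Hs) as [s' Hs']. exists s'; auto.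
    - exists s; intro; contradiction. }
  set (F := fun n s => proj1_sig (constructive_indefinite_description _ (Hch n s))).
  assert (HF : forall n s, goodst La a b s -> stepP La a b g n s (F n s)).
  { intros n s. exact (proj2_sig (constructive_indefinite_description _ (Hch n s))). }
  set (st := fix st (n : nat) : S1 * S1 * R := match n with O => s0 | S k => F k (st k) end).
  assert (Hst : forall n, goodst La a b (st n) /\ stepP La a b g n (st n) (st (S n))).
  { induction n.
    - split; [auto | apply HF; auto].
    - assert (goodst La a b (st (S n))).
      { destruct IHn as [_ IH]. apply stepP_good in IH. exact IH. }
      split; [auto | apply HF; auto]. }
  set (X := fun n => rho a (fst (fst (st n)))).
  set (Y := fun n => rho a (snd (fst (st n)))).
  set (Rr := fun n => snd (st n)).
  assert (HS : forall n, Rr (S n) <= Rr n / 2 /\ Rabs (X (S n) - X n) + Rr (S n) <= Rr n /\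
      Rabs (Y (S n) - Y n) + Rr (S n) <= Rr n).
  { intro n. destruct (Hst n) as [_ H]. unfold X, Y, Rr.
    destruct (st n) as [[? ?] ?]; destruct (st (S n)) as [[? ?] ?]. simpl in *. tauto. }
  assert (HG : forall n, 0 < X n - Rr n /\ X n + Rr n < rho a b /\ rho a b < Y n - Rr n /\ Y n + Rr n < 1 /\ 0 < Rr n).
  { intro n. destruct (Hst n) as [H _]. unfold X, Y, Rr.
    destruct (st n) as [[? ?] ?]. simpl in *. tauto. }
  assert (Hnest : forall m n, (m <= n)%nat ->
     X m - Rr m <= X n - Rr n /\ X n + Rr n <= X m + Rr m /\
     Y m - Rr m <= Y n - Rr n /\ Y n + Rr n <= Y m + Rr m).
  { intros m n Hmn. induction Hmn. lra.
    destruct (HS m0) as [_ [A1 A2]]. revert A1 A2. unfold Rabs; split_ifs; lra. }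
  assert (Hbnd : forall m n, X m - Rr m <= X n + Rr n /\ Y m - Rr m <= Y n + Rr n).
  { intros m n. destruct (Nat.le_ge_cases m n) as [H|H].
    - destruct (Hnest m n H). pose proof (HG n). lra.
    - destruct (Hnest n m H). pose proof (HG m). lra. }
  destruct (completeness (fun t => exists n, t = X n - Rr n)) as [Xs [HXs1 HXs2]].
  { exists (X 0%nat + Rr 0%nat). intros t [n ->]. apply Hbnd. }
  { exists (X 0%nat - Rr 0%nat); eauto. }
  destruct (completeness (fun t => exists n, t = Y n - Rr n)) as [Ys [HYs1 HYs2]].
  { exists (Y 0%nat + Rr 0%nat). intros t [n ->]. apply Hbnd. }
  { exists (Y 0%nat - Rr 0%nat); eauto. }
  assert (HX : forall n, Rabs (Xs - X n) <= Rr n /\ Rabs (Ys - Y n) <= Rr n).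
  { intro n.
    assert (X n - Rr n <= Xs) by (apply HXs1; eauto).
    assert (Xs <= X n + Rr n) by (apply HXs2; intros t [m ->]; apply Hbnd).
    assert (Y n - Rr n <= Ys) by (apply HYs1; eauto).
    assert (Ys <= Y n + Rr n) by (apply HYs2; intros t [m ->]; apply Hbnd).
    unfold Rabs; split_ifs; split; lra. }
  assert (HR : forall n, Rr n <= Rr 0%nat * (1/2) ^ n).
  { induction n. simpl; lra. destruct (HS n) as [? _]. simpl. lra. }
  destruct (HX 0%nat) as [HX0 HY0]. destruct (HG 0%nat) as [G1 [G2 [G3 [G4 G5]]]].
  destruct (from_rho a Xs) as [xs Hxs].
  { revert HX0; unfold Rabs; split_ifs; intros; lra. }
  destruct (from_rho a Ys) as [ys Hys].
  { revert HY0; unfold Rabs; split_ifs; intros; lra. }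
  assert (Hcr : linked a b xs ys).
  { apply LR. left. rewrite Hxs, Hys. revert HX0 HY0; unfold Rabs; split_ifs; intros; lra. }
  assert (Hla : La xs ys).
  { apply NNPP; intro Hno.
    destruct HL as [_ [Hcl _]].
    assert (xs <> ys) by (intro E; subst; destruct Hcr as [_ [N _]]; auto).
    destruct (Hcl xs ys H Hno) as [eps [He Heps]].
    destruct (half_pow_small (Rr 0%nat) eps He) as [N HNN].
    apply (Heps (fst (fst (st N))) (snd (fst (st N)))).
    - eapply Rle_lt_trans; [apply (cdist_le a)|]. rewrite Hxs. fold (X N).
      destruct (HX N); pose proof (HR N); pose proof HNN; lra.
    - eapply Rle_lt_trans; [apply (cdist_le a)|]. rewrite Hys. fold (Y N).
      destruct (HX N); pose proof (HR N); pose proof HNN; lra.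
    - destruct (Hst N) as [Hg' _]. destruct (st N) as [[? ?] ?]. simpl. apply Hg'. }
  assert (Cs : crossed_leaves La a b (xs, ys)) by (split; auto).
  set (n := g (xs, ys)).
  destruct (Hst n) as [_ Hstep].
  destruct (HX (S n)) as [HA HB].
  unfold X, Y, Rr in HA, HB.
  destruct (st n) as [[? ?] ?]; destruct (st (S n)) as [[x1 y1] r1]. simpl in Hstep, HA, HB.
  destruct Hstep as [_ [_ [_ [_ Hav]]]].
  apply (Hav xs ys Cs eq_refl). rewrite Hxs, Hys. split; auto.
Qed.

Lemma Rel_Est : forall La, lamination La -> no_isolated_leaves La -> at_most_two_leaves_at_each_point La ->
  forall p q, Rel La p q <-> Est La p q.
Proof.
  intros La HL HN Ht p q. split.
  - intro HR. apply HR.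
    + split; [|apply Est_closed_pairs]. split; [apply Est_refl|split; [apply Est_sym|]].
      intros x y z; apply Est_trans; auto.
    + apply Est_La; auto.
    + intros a b Hab Hc. right. apply (H2 La HL HN); auto.
  - intros HE E [[Er [Es Et]] Ec] HLa Hc.
    destruct (classic (p = q)) as [<-|Npq]; [apply Er|].
    destruct HE as [?|HE]; [contradiction|].
    apply Hc; auto. exists (fun _ => 0%nat). intros [x y] z [Hx Hl]. exfalso; exact (HE x y Hx Hl).
Qed.

Lemma Est_unc : forall La a b, Est La a b -> a <> b -> unc La a b.
Proof. intros La a b [H|H] N; [contradiction|auto]. Qed.

Lemma Fill : forall La, lamination La -> forall o o', o <> o' -> unc La o o' ->
  (forall u, 0 < rho o u < rho o o' -> exists c e, La c e /\ linked o u c e) -> La o o'.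
Proof.
  intros La HL o o' Noo Hun Hcov.
  set (B := rho o o').
  assert (HB : 0 < B < 1) by (split; [apply rho_pos; auto | apply rho_bnd]).
  assert (HH : forall w, 0 < rho o w < B -> exists c e, La c e /\ 0 < rho o c < rho o w /\ rho o w < rho o e <= B).
  { intros w Hw. destruct (Hcov w Hw) as [c [e [Hce Hl]]].
    apply LR in Hl.
    assert (Hor : exists c e, La c e /\ 0 < rho o c < rho o w /\ rho o w < rho o e).
    { destruct Hl as [[? ?]|[? ?]]; [exists c, e | exists e, c; split; [apply lam_sym; auto|]]; auto. }
    destruct Hor as [c' [e' [Hce' [H1 H2]]]]. exists c', e'. repeat split; auto; try lra.
    apply Rnot_lt_le. intro Hlt. apply (Hun c' e' Hce'). apply LR. left. fold B. lra. }
  destruct (from_rho o (B/2)) as [u Hu]; [lra|].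
  set (Lu := fun c e => La c e /\ 0 < rho o c < rho o u /\ rho o u < rho o e <= B).
  assert (Hnest : forall c1 e1 c2 e2, Lu c1 e1 -> Lu c2 e2 -> rho o c1 < rho o c2 -> rho o e2 <= rho o e1).
  { intros c1 e1 c2 e2 [L1 [A1 B1]] [L2 [A2 B2]] Hlt. apply Rnot_lt_le; intro Hlt2.
    apply (lam_unl La HL c1 e1 c2 e2 L1 L2). apply (interleave o); lra. }
  destruct (HH u ltac:(lra)) as [c0 [e0 [L0 [A0 B0]]]].
  assert (Lu0 : Lu c0 e0) by (split; auto).
  destruct (completeness (fun t => exists c e, Lu c e /\ t = - rho o c)) as [mc [Hmc1 Hmc2]].
  { exists 0. intros t [c [e [[_ [Hc _]] ->]]]. lra. }
  { exists (- rho o c0); eauto. }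
  destruct (completeness (fun t => exists c e, Lu c e /\ t = rho o e)) as [es [Hes1 Hes2]].
  { exists B. intros t [c [e [[_ [_ He]] ->]]]. lra. }
  { exists (rho o e0); eauto. }
  set (cs := - mc).
  assert (Hcs : forall c e, Lu c e -> cs <= rho o c /\ rho o e <= es).
  { intros c e H. split; [unfold cs; assert (- rho o c <= mc) by (apply Hmc1; eauto); lra | apply Hes1; eauto]. }
  assert (Hcs0 : 0 <= cs).
  { unfold cs. assert (mc <= 0); [|lra]. apply Hmc2. intros t [c [e [[_ [Hc _]] ->]]]. lra. }
  assert (Hesb : es <= B).
  { apply Hes2. intros t [c [e [[_ [_ He]] ->]]]. lra. }
  destruct (Hcs c0 e0 Lu0) as [Hc0 He0].
  assert (Happ : forall eps, 0 < eps -> exists c e, Lu c e /\ rho o c < cs + eps /\ es - eps < rho o e).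
  { intros eps He.
    assert (E1 : exists c e, Lu c e /\ - rho o c > mc - eps).
    { apply NNPP; intro N. assert (mc <= mc - eps); [|lra]. apply Hmc2.
      intros t [c [e [H ->]]]. apply Rnot_lt_le; intro. apply N; exists c, e; split; auto; lra. }
    assert (E2 : exists c e, Lu c e /\ rho o e > es - eps).
    { apply NNPP; intro N. assert (es <= es - eps); [|lra]. apply Hes2.
      intros t [c [e [H ->]]]. apply Rnot_lt_le; intro. apply N; exists c, e; split; auto; lra. }
    destruct E1 as [c1 [e1 [L1 H1]]]. destruct E2 as [c2 [e2 [L2 H2]]].
    unfold cs. destruct (Rlt_or_le (rho o c1) (rho o c2)) as [Hlt|Hle].
    - pose proof (Hnest _ _ _ _ L1 L2 Hlt). exists c1, e1; split; auto; lra.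
    - exists c2, e2; split; auto; lra. }
  destruct (from_rho o cs) as [P HP]; [lra|].
  destruct (from_rho o es) as [Q HQ]; [lra|].
  assert (NPQ : P <> Q) by (intro E; subst; lra).
  assert (LPQ : La P Q).
  { apply NNPP; intro N. destruct HL as [_ [Hcl _]].
    destruct (Hcl P Q NPQ N) as [eps [He Heps]].
    destruct (Happ eps He) as [c [e [Lce [Hc He']]]].
    destruct (Hcs c e Lce).
    apply (Heps c e).
    - eapply Rle_lt_trans; [apply (cdist_le o)|]. rewrite HP. rewrite Rabs_left1; lra.
    - eapply Rle_lt_trans; [apply (cdist_le o)|]. rewrite HQ. rewrite Rabs_right; lra.
    - destruct Lce; auto. }
  assert (Hcs_0 : cs = 0).
  { apply NNPP; intro N.
    destruct (HH P ltac:(lra)) as [c' [e' [L' [A' B']]]].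
    assert (es <= rho o e').
    { apply Rnot_lt_le; intro Hlt. apply (lam_unl La HL P Q c' e' LPQ L').
      apply linked_sym34. apply (interleave o); lra. }
    assert (Lu c' e') by (split; auto; lra).
    destruct (Hcs c' e' H0). lra. }
  assert (EP : P = o) by (apply (rho_inj o); rewrite rho_self; lra).
  subst P.
  assert (Hes_B : es = B).
  { apply NNPP; intro N.
    destruct (HH Q ltac:(lra)) as [c' [e' [L' [A' B']]]].
    apply (lam_unl La HL o Q c' e' LPQ L'). apply (interleave o); rewrite ?rho_self; lra. }
  assert (EQ : Q = o') by (apply (rho_inj o); fold B; lra).
  subst Q; auto.
Qed.

Lemma arcs_link : forall a b z w, arc_in a b z -> arc_out a b w -> linked a b z w.
Proof. brute. Qed.
Lemma arc_in_a : forall a b, ~ arc_in a b a.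
Proof. brute. Qed.
Lemma arc_in_b : forall a b, ~ arc_in a b b.
Proof. brute. Qed.

Lemma hull_core : forall La, lamination La -> no_isolated_leaves La -> at_most_two_leaves_at_each_point La ->
  forall a b z w, La a b -> Est La a z -> Est La a w ->
  0 < rho a z < rho a b -> rho a b < rho a w -> False.
Proof.
  intros La HL HN Ht a b z w Hab Hz Hw H1 H2.
  pose proof (rho_bnd a w).
  set (B := rho a b) in *.
  destruct (small4 (rho a z / 2) ((B - rho a z)/2) ((rho a w - B)/2) ((1 - rho a w)/2)) as [d [Hd [D1 [D2 [D3 D4]]]]]; try lra.
  destruct (near_leaf La HL HN a b Hab d Hd) as [p [q [Hpq [Hp [Hq Hn]]]]].
  assert (Hq' : Rabs (B - rho a q) < d) by (apply (cdist_lt a b q d d); auto; try split; unfold B in *; lra).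
  pose proof (cdist_base a p d Hp) as Hp'.
  pose proof (lam_unl La HL a b p q Hab Hpq) as Hu.
  assert (Nz : a <> z) by (intro E; subst; rewrite rho_self in H1; lra).
  assert (Nw : a <> w) by (intro E; subst; rewrite rho_self in H2; lra).
  pose proof (Est_unc _ _ _ Hz Nz) as Uz. pose proof (Est_unc _ _ _ Hw Nw) as Uw.
  assert (Eab : Est La a b) by (apply Est_La; auto).
  destruct (classic (p = a)) as [->|Npa].
  - assert (Nqb : q <> b) by (intro E; subst; apply Hn; auto).
    assert (rho a q <> B) by (intro E; apply Nqb, (rho_inj a); auto).
    destruct (Rlt_or_le (rho a q) B).
    + assert (Ezb : Est La z b) by (apply (Est_trans La HL HN Ht z a b); auto; apply Est_sym; auto).
      assert (Nzb : z <> b) by (intro E; subst; unfold B in *; lra).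
      apply (Est_unc _ _ _ Ezb Nzb a q Hpq). apply linked_sym34. apply (interleave a).
      * fold B. revert Hq'; unfold Rabs; split_ifs; intros; repeat split; lra.
      * left. rewrite rho_self. lra.
    + assert (Ewb : Est La w b) by (apply (Est_trans La HL HN Ht w a b); auto; apply Est_sym; auto).
      assert (Nwb : w <> b) by (intro E; subst; unfold B in *; lra).
      apply (Est_unc _ _ _ Ewb Nwb a q Hpq). apply linked_sym12, linked_sym34. apply (interleave a).
      * fold B. revert Hq'; unfold Rabs; split_ifs; intros; repeat split; lra.
      * left. rewrite rho_self. unfold B in *. lra.
  - pose proof (rho_pos a p Npa). pose proof (rho_bnd a p).
    destruct Hp' as [Hp'|Hp'].
    + destruct (Rlt_or_le B (rho a q)).
      * apply Hu. apply LR. left. fold B. repeat split; lra.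
      * apply (Uz p q Hpq). apply LR. left. revert Hq'; unfold Rabs; split_ifs; intros; repeat split; lra.
    + destruct (Rlt_or_le (rho a q) B).
      * apply Hu. apply LR. right. fold B. revert Hq'; unfold Rabs; split_ifs; intros; repeat split; lra.
      * apply (Uw p q Hpq). apply LR. right. revert Hq'; unfold Rabs; split_ifs; intros; repeat split; lra.
Qed.

Lemma hull : forall La, lamination La -> no_isolated_leaves La -> at_most_two_leaves_at_each_point La ->
  forall a b, La a b ->
  (forall z, Est La a z -> ~ arc_in a b z) \/ (forall z, Est La a z -> ~ arc_out a b z).
Proof.
  intros La HL HN Ht a b Hab.
  apply NNPP; intro N. apply not_or_and in N. destruct N as [N1 N2].
  apply not_all_ex_not in N1. destruct N1 as [z N1].
  apply not_all_ex_not in N2. destruct N2 as [w N2].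
  apply imply_to_and in N1; apply imply_to_and in N2.
  destruct N1 as [Ez Az]; destruct N2 as [Ew Aw]. apply NNPP in Az; apply NNPP in Aw.
  pose proof (arcs_link a b z w Az Aw) as Hl. apply LR in Hl.
  destruct Hl as [[? ?]|[? ?]].
  - apply (hull_core La HL HN Ht a b z w); auto.
  - apply (hull_core La HL HN Ht a b w z); auto.
Qed.

Lemma Lam_basic : forall L p q, equivalence_rel L -> Lam L p q -> L p q /\ p <> q.
Proof.
  intros L p q HE [[N [H _]]|[_ [_ [H1 [H2 [N _]]]]]]; auto.
Qed.

Lemma hull_rho : forall (nu : S1 -> Prop) p q, hull_side nu p q ->
  (forall x, nu x -> x <> p -> rho p q <= rho p x) \/ (forall x, nu x -> rho p x <= rho p q).
Proof.
  intros nu p q [Hp [Hq [N [H|H]]]];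
  destruct (arcs_rho p q N) as [[A1 A2]|[A1 A2]].
  - left. intros x Hx Nx. pose proof (rho_pos p x Nx). apply Rnot_lt_le; intro.
    apply (H x Hx). apply A1. lra.
  - right. intros x Hx. apply Rnot_lt_le; intro. apply (H x Hx). apply A1. lra.
  - right. intros x Hx. apply Rnot_lt_le; intro. apply (H x Hx). apply A2. lra.
  - left. intros x Hx Nx. pose proof (rho_pos p x Nx). apply Rnot_lt_le; intro.
    apply (H x Hx). apply A2. lra.
Qed.

Lemma partA : forall La, boundary_lamination La -> at_most_two_leaves_at_each_point La.
Proof.
  intros La [L [[HE _] Hiff]] p q1 q2 q3 H1 H2 H3.
  apply Hiff in H1; apply Hiff in H2; apply Hiff in H3.
  apply NNPP; intro Nn. apply not_or_and in Nn; destruct Nn as [N12 Nn].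
  apply not_or_and in Nn; destruct Nn as [N13 N23].
  destruct (Lam_basic _ _ _ HE H1) as [L1 P1].
  destruct (Lam_basic _ _ _ HE H2) as [L2 P2].
  destruct (Lam_basic _ _ _ HE H3) as [L3 P3].
  assert (Hh : forall q, Lam L p q -> forall q', L p q' -> q' <> p -> q' <> q -> hull_side (L p) p q).
  { intros q [[_ [_ T]]|[_ [_ Hs]]] q' Lq' Np Nq; auto.
    destruct (T q' Lq') as [E|E]; contradiction. }
  pose proof (Hh q1 H1 q2 L2 (fun E => P2 (eq_sym E)) (fun E => N12 (eq_sym E))) as S1'.
  pose proof (Hh q2 H2 q1 L1 (fun E => P1 (eq_sym E)) N12) as S2'.
  pose proof (Hh q3 H3 q1 L1 (fun E => P1 (eq_sym E)) N13) as S3'.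
  apply hull_rho in S1'; apply hull_rho in S2'; apply hull_rho in S3'.
  assert (Q1 : q1 <> p) by auto. assert (Q2 : q2 <> p) by auto. assert (Q3 : q3 <> p) by auto.
  assert (Inj : forall x y, rho p x = rho p y -> x = y) by apply rho_inj.
  destruct S1' as [T1|T1]; destruct S2' as [T2|T2]; destruct S3' as [T3|T3];
  repeat match goal with
  | T : forall x, L p x -> x <> p -> _ |- _ =>
      pose proof (T q1 L1 Q1); pose proof (T q2 L2 Q2); pose proof (T q3 L3 Q3); clear T
  | T : forall x, L p x -> _ |- _ =>
      pose proof (T q1 L1); pose proof (T q2 L2); pose proof (T q3 L3); clear T
  end;
  first [ apply N12, Inj; lra | apply N13, Inj; lra | apply N23, Inj; lra ].
Qed.

Lemma Lam_ext : forall L L', (forall x y, L x y <-> L' x y) -> forall a b, Lam L a b <-> Lam L' a b.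
Proof.
  intros L L' H. assert (L = L') as ->; [|tauto].
  apply functional_extensionality; intro x; apply functional_extensionality; intro y.
  apply propositional_extensionality; auto.
Qed.

Lemma FillArc : forall La, lamination La -> no_isolated_leaves La -> at_most_two_leaves_at_each_point La ->
  forall a b, a <> b -> Est La a b ->
  (forall z, Est La a z -> ~ arc_in a b z) \/ (forall z, Est La a z -> ~ arc_out a b z) -> La a b.
Proof.
  intros La HL HN Ht a b N Eab Hmiss.
  assert (Fa : (forall u, 0 < rho a u < rho a b -> ~ Est La a u) -> La a b).
  { intro Hm. apply (Fill La HL a b N (Est_unc _ _ _ Eab N)).
    intros u Hu. destruct (not_Est La a u (Hm u Hu)) as [_ Hx]. exact Hx. }
  assert (Fb : (forall u, rho a b < rho a u -> ~ Est La a u) -> La a b).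
  { intro Hm. apply (lam_sym La HL). apply (Fill La HL b a (fun E => N (eq_sym E))).
    - apply unc_sym, Est_unc; auto.
    - intros u Hu. apply (rho_flip a b u N) in Hu.
      assert (~ Est La b u).
      { intro E. apply (Hm u Hu). apply (Est_trans La HL HN Ht a b u); auto. }
      destruct (not_Est La b u H) as [_ Hx]. exact Hx. }
  destruct (arcs_rho a b N) as [[A1 A2]|[A1 A2]]; destruct Hmiss as [M|M].
  - apply Fa. intros u Hu E. apply (M u E). apply A1; auto.
  - apply Fb. intros u Hu E. apply (M u E). apply A2; auto.
  - apply Fb. intros u Hu E. apply (M u E). apply A1; auto.
  - apply Fa. intros u Hu E. apply (M u E). apply A2; auto.
Qed.

Lemma main_iff : forall La, lamination La -> no_isolated_leaves La -> at_most_two_leaves_at_each_point La ->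
  forall a b, Lam (Est La) a b <-> La a b.
Proof.
  intros La HL HN Ht a b. split.
  - intros [[N [Eab T]]|[_ [_ [_ [Eab [N Hs]]]]]].
    + apply (FillArc La HL HN Ht a b N Eab). left. intros z Ez Az.
      destruct (T z Ez) as [->| ->]; [apply (arc_in_a a b) | apply (arc_in_b a b)]; auto.
    + apply (FillArc La HL HN Ht a b N Eab Hs).
  - intro Hab. pose proof (lam_irr La HL a b Hab) as N.
    assert (Eab : Est La a b) by (apply Est_La; auto).
    destruct (classic (exists w, Est La a w /\ w <> a /\ w <> b)) as [[w [Ew [Na Nb]]]|Hno].
    + right. split; [|split].
      * intros [_ [_ T]]. destruct (T w Ew); contradiction.
      * exists b, w. repeat split; auto; try (intro E; subst; auto).
      * split; [apply Est_refl|split; [auto|split; [auto|]]]. apply (hull La HL HN Ht a b Hab).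
    + left. split; [auto|split; [auto|]]. intros x Ex.
      destruct (classic (x = a)); auto. destruct (classic (x = b)); auto.
      exfalso; apply Hno; eauto.
Qed.

Theorem proposition2p5 :
  (forall La : S1 -> S1 -> Prop,
      boundary_lamination La -> at_most_two_leaves_at_each_point La) /\
  (forall La : S1 -> S1 -> Prop,
      lamination La ->
      at_most_two_leaves_at_each_point La ->
      no_isolated_leaves La ->
      (forall a b, Lam (Rel La) a b <-> La a b) /\ boundary_lamination La).
Proof.
  split; [exact partA|].
  intros La HL Ht HN. split.
  - intros a b. rewrite (Lam_ext (Rel La) (Est La) (Rel_Est La HL HN Ht)). apply main_iff; auto.
  - exists (Est La). split.
    + split; [|split; [|split]].
      * split; [apply Est_refl|split; [apply Est_sym|]]. intros x y z; apply Est_trans; auto.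
      * apply Est_closed_set.
      * apply Est_closed_pairs.
      * apply Est_unlinked.
    + intros a b. symmetry. apply main_iff; auto.
Qed.
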